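(* Let $\alpha\in(1,\infty)$, let $p_X$ be a distribution on a finite set $\mathcal X$ and $p_{Y\mid X}$ a channel to a finite set $\mathcal Y$. Let $\tilde q^{(0)}_{Y\mid X}$ be an initial channel and for $k\ge0$ define $$r^{(k)}_{X\mid Y}(x\mid y)=\frac{p_X(x)\tilde q^{(k)}_{Y\mid X}(y\mid x)}{\sum_{x'}p_X(x')\tilde q^{(k)}_{Y\mid X}(y\mid x')},\qquad \tilde q^{(k+1)}_{Y\mid X}(y\mid x)=\frac{p_{Y\mid X}(y\mid x)r^{(k)}_{X\mid Y}(x\mid y)^{1-1/\alpha}}{\sum_{y'}p_{Y\mid X}(y'\mid x)r^{(k)}_{X\mid Y}(x\mid y')^{1-1/\alpha}}.$$ Let $\tilde q^{\mathrm{opt}}_{Y\mid X}$ be a channel achieving the maximum in $I_\alpha^{\mathrm C}(X;Y)=\max_{\tilde q_{Y\mid X}}\max_{r_{X\mid Y}}\tilde F_\alpha^{\mathrm C}(\tilde q_{Y\mid X},r_{X\mid Y})$. Then for every $k\ge0$, $$I_\alpha^{\mathrm C}(X;Y)-\tilde F_\alpha^{\mathrm C}(\tilde q^{(k+1)}_{Y\mid X},r^{(k)}_{X\mid Y})\le\frac{\alpha}{\alpha-1}\sum_{x,y}p_X(x)\tilde q^{\mathrm{opt}}_{Y\mid X}(y\mid x)\log\frac{\tilde q^{(k+1)}_{Y\mid X}(y\mid x)}{\tilde q^{(k)}_{Y\mid X}(y\mid x)}.$$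
   Context: $\log$ is natural, $D$ is the Kullback–Leibler divergence, and $D_\alpha(p\|q):=\frac{1}{\alpha-1}\log\sum_zp(z)^\alpha q(z)^{1-\alpha}$. The Augustin–Csiszár mutual information is $I_\alpha^{\mathrm C}(X;Y):=\min_{q_Y}\sum_xp_X(x)D_\alpha(p_{Y\mid X}(\cdot\mid x)\|q_Y)$. For a channel $\tilde q_{Y\mid X}$ and a reverse channel $r_{X\mid Y}$ (a family of distributions $r_{X\mid Y}(\cdot\mid y)$ on $\mathcal X$), $\tilde F_\alpha^{\mathrm C}(\tilde q_{Y\mid X},r_{X\mid Y}):=\frac{\alpha}{1-\alpha}D(p_X\tilde q_{Y\mid X}\|p_Xp_{Y\mid X})+\mathbb E^{p_X\tilde q_{Y\mid X}}[\log\frac{r_{X\mid Y}(X\mid Y)}{p_X(X)}]$; for $\alpha>1$ one has $I_\alpha^{\mathrm C}(X;Y)=\max_{\tilde q_{Y\mid X}}\max_{r_{X\mid Y}}\tilde F_\alpha^{\mathrm C}$. *)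

(* Defs.v *)
From HB Require Import structures.
From mathcomp Require Import all_boot all_order all_algebra.
From mathcomp Require Import all_classical all_reals all_analysis.
Set Implicit Arguments. Unset Strict Implicit. Unset Printing Implicit Defensive.
Import Order.TTheory GRing.Theory Num.Theory.
Local Open Scope ring_scope.

Section Defs.
Variables (R : realType) (X Y : finType).

Definition is_dist (T : finType) (p : T -> R) :=
  (forall t, 0 <= p t) /\ \sum_(t : T) p t = 1.

(* channel W : X -> Y -> R,  W x y = W(y|x) *)
Definition is_channel (W : X -> Y -> R) := forall x, is_dist (W x).

(* reverse channel r : Y -> X -> R,  r y x = r(x|y) *)
Definition is_revchannel (r : Y -> X -> R) := forall y, is_dist (r y).

(* D(p_X q || p_X W) with the convention 0 log(0/..) = 0 (terms with weight
   p x * q x y = 0 vanish); finite by the admissibility condition below. *)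
Definition KL_joint (p : X -> R) (q W : X -> Y -> R) : R :=
  \sum_(x : X) \sum_(y : Y) p x * q x y * ln (q x y / W x y).

Definition FC (a : R) (p : X -> R) (W q : X -> Y -> R) (r : Y -> X -> R) : R :=
  a / (1 - a) * KL_joint p q W
  + \sum_(x : X) \sum_(y : Y) p x * q x y * ln (r y x / p x).

(* (q, r) for which FC is finite (otherwise FC = -oo for a > 1):
   q << W and r > 0 on the support of p_X q. *)
Definition admissible (p : X -> R) (W q : X -> Y -> R) (r : Y -> X -> R) :=
  forall x y, 0 < p x -> 0 < q x y -> 0 < W x y /\ 0 < r y x.

Definition rev_of (p : X -> R) (q : X -> Y -> R) : Y -> X -> R :=
  fun y x => p x * q x y / \sum_(x' : X) p x' * q x' y.

Definition upd (a : R) (W : X -> Y -> R) (r : Y -> X -> R) : X -> Y -> R :=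
  fun x y => W x y * r y x `^ (1 - a^-1)
             / \sum_(y' : Y) W x y' * r y' x `^ (1 - a^-1).

Fixpoint qiter (a : R) (p : X -> R) (W q0 : X -> Y -> R) (k : nat)
  : X -> Y -> R :=
  match k with
  | 0 => q0
  | k'.+1 => upd a W (rev_of p (qiter a p W q0 k'))
  end.

End Defs.

(* Main.v *)
Require Import Defs.
From HB Require Import structures.
From mathcomp Require Import all_boot all_order all_algebra.
From mathcomp Require Import all_classical all_reals all_analysis.
From mathcomp Require Import ring lra.
Import Order.TTheory GRing.Theory Num.Theory.
Local Open Scope ring_scope.

Lemma ln_key (R : realType) (u v : R) : 0 < u -> 0 < v -> u - v <= u * (ln u - ln v).
Proof.
move=> hu hv.
have h := @le_ln1Dx R (v / u - 1).
have h1 : -1 < v / u - 1 by have := divr_gt0 hv hu; lra.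
have := h h1; rewrite addrC subrK ln_div ?posrE ?divr_gt0 // => h2.
have : u * (ln v - ln u) <= u * (v / u - 1) by rewrite ler_wpM2l // ltW.
move=> h3.
have e : u * (v / u) = v by rewrite mulrC divfK // gt_eqF.
lra.
Qed.

Section S.
Variables (R : realType) (X Y : finType).

Lemma dsumD (F G : X -> Y -> R) :
  \sum_x \sum_y (F x y + G x y) = \sum_x \sum_y F x y + \sum_x \sum_y G x y.
Proof. rewrite -big_split; apply eq_bigr => x _; by rewrite big_split. Qed.
Lemma dsumB (F G : X -> Y -> R) :
  \sum_x \sum_y (F x y - G x y) = \sum_x \sum_y F x y - \sum_x \sum_y G x y.
Proof. rewrite -sumrB; apply eq_bigr => x _; by rewrite sumrB. Qed.
Lemma dsumZ c (F : X -> Y -> R) :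
  \sum_x \sum_y (c * F x y) = c * \sum_x \sum_y F x y.
Proof. rewrite big_distrr; apply eq_bigr => x _; by rewrite big_distrr. Qed.
Lemma dsum_le (F G : X -> Y -> R) : (forall x y, F x y <= G x y) ->
  \sum_x \sum_y F x y <= \sum_x \sum_y G x y.
Proof. move=> h; apply ler_sum => x _; apply ler_sum => y _; exact: h. Qed.

Lemma FC_sum a p (W q : X -> Y -> R) r : FC a p W q r =
  \sum_x \sum_y (a / (1 - a) * (p x * q x y * ln (q x y / W x y))
                 + p x * q x y * ln (r y x / p x)).
Proof. by rewrite /FC /KL_joint dsumD dsumZ. Qed.

Variables (a : R) (p : X -> R) (W q0 : X -> Y -> R).
Hypotheses (ha : 1 < a) (hp : is_dist p) (hW : is_channel W) (hq0 : is_channel q0)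
  (hq0W : forall x y, 0 < W x y -> 0 < q0 x y).

Let beta := 1 - a^-1.

Lemma W_ge0 x y : 0 <= W x y. Proof. exact: (hW x).1. Qed.
Lemma p_ge0 x : 0 <= p x. Proof. exact: hp.1. Qed.

Lemma upd_ge0 r x y : 0 <= upd a W r x y.
Proof.
rewrite /upd; apply divr_ge0; first by rewrite mulr_ge0 ?W_ge0 ?powR_ge0.
by apply sumr_ge0 => i _; rewrite mulr_ge0 ?W_ge0 ?powR_ge0.
Qed.

Lemma iter_ge0 k x y : 0 <= qiter a p W q0 k x y.
Proof. case: k => [|k] /=; [exact: (hq0 x).1 | exact: upd_ge0]. Qed.

Lemma W_ex x : exists y, 0 < W x y.
Proof.
apply/not_existsP => hn.
have : \sum_y W x y = 0.
  apply big1 => y _; apply/eqP; rewrite eq_le W_ge0 andbT.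
  by rewrite leNgt; apply/negP => h; apply: (hn y).
by rewrite (hW x).2 => /eqP; rewrite oner_eq0.
Qed.

Lemma m_gt0 (q : X -> Y -> R) x y : (forall x y, 0 <= q x y) -> 0 < p x -> 0 < q x y ->
  0 < \sum_x' p x' * q x' y.
Proof.
move=> hq hpx hqxy; rewrite (bigD1 x) //=.
apply: (lt_le_trans (y := p x * q x y)); first exact: mulr_gt0.
rewrite lerDl; apply sumr_ge0 => i _; exact: mulr_ge0 (p_ge0 _) (hq _ _).
Qed.

Lemma step (q : X -> Y -> R) x : (forall x y, 0 <= q x y) -> 0 < p x ->
  (forall y, 0 < W x y -> 0 < q x y) ->
  [/\ forall y, 0 < W x y -> 0 < rev_of p q y x,
      0 < \sum_y' W x y' * rev_of p q y' x `^ beta,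
      \sum_y upd a W (rev_of p q) x y = 1 &
      forall y, 0 < W x y -> 0 < upd a W (rev_of p q) x y].
Proof.
move=> hq hpx hqW.
have hr : forall y, 0 < W x y -> 0 < rev_of p q y x.
  move=> y hy; rewrite /rev_of divr_gt0 ?mulr_gt0 ?hqW //.
  exact: m_gt0 hq hpx (hqW _ hy).
have hZ : forall y, 0 < W x y -> 0 < \sum_y' W x y' * rev_of p q y' x `^ beta.
  move=> y hy; rewrite (bigD1 y) //=.
  apply: (lt_le_trans (y := W x y * rev_of p q y x `^ beta)).
    by rewrite mulr_gt0 ?powR_gt0 ?hr.
  rewrite lerDl; apply sumr_ge0 => i _; by rewrite mulr_ge0 ?W_ge0 ?powR_ge0.
have [y0 hy0] := W_ex x.
have hZ0 := hZ _ hy0.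
split.
- exact: hr.
- exact: hZ0.
- by rewrite /upd -big_distrl /= divff // gt_eqF.
- move=> y hy; rewrite /upd divr_gt0 ?mulr_gt0 ?powR_gt0 ?hr //.
Qed.

Lemma iter_pos k x : 0 < p x -> forall y, 0 < W x y -> 0 < qiter a p W q0 k x y.
Proof.
elim: k x => [|k IH] x hpx /=; first exact: hq0W.
by have [_ _ _ h] := @step (qiter a p W q0 k) x (@iter_ge0 k) hpx (IH x hpx).
Qed.

Lemma iter_sum k x : 0 < p x -> \sum_y qiter a p W q0 k x y = 1.
Proof.
case: k => [|k] hpx /=; first exact: (hq0 x).2.
by have [_ _ h _] := @step (qiter a p W q0 k) x (@iter_ge0 k) hpx (@iter_pos k x hpx).
Qed.

Lemma main (qopt : X -> Y -> R) (ropt : Y -> X -> R) (k : nat) :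
  is_channel qopt -> is_revchannel ropt -> admissible p W qopt ropt ->
  FC a p W qopt ropt
    - FC a p W (qiter a p W q0 k.+1) (rev_of p (qiter a p W q0 k))
  <= a / (a - 1) *
     \sum_(x : X) \sum_(y : Y)
        p x * qopt x y * ln (qiter a p W q0 k.+1 x y / qiter a p W q0 k x y).
Proof.
move=> hqo hro had.
set q := qiter a p W q0 k.
have -> : qiter a p W q0 k.+1 = upd a W (rev_of p q) by [].
set r := rev_of p q.
set q' := upd a W r.
set K := a / (a - 1).
set m := fun y => \sum_x' p x' * q x' y.
set Z := fun x => \sum_y' W x y' * r y' x `^ beta.
have a0 : a != 0 by rewrite gt_eqF // (lt_trans ltr01).
have a1 : a - 1 != 0 by rewrite subr_eq0 gt_eqF.
have a1' : 1 - a != 0 by rewrite subr_eq0 lt_eqF.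
have hK : 1 <= K by rewrite /K ler_pdivlMr ?subr_gt0 // mul1r lerBlDr lerDl.
have qge : forall x y, 0 <= q x y by exact: iter_ge0.
have q'ge : forall x y, 0 <= q' x y by move=> *; exact: upd_ge0.
have qoge : forall x y, 0 <= qopt x y by move=> x; exact: (hqo x).1.
have roge : forall x y, 0 <= ropt y x by move=> x y; exact: (hro y).1.
have mge : forall y, 0 <= m y by move=> y; apply sumr_ge0 => i _; rewrite mulr_ge0 ?p_ge0.
have hA : FC a p W q' r = \sum_x \sum_y p x * qopt x y * (K * ln (Z x) - ln (p x)).
  rewrite FC_sum; apply eq_bigr => x _.
  have [hpx|hpx0] := ltrP 0 (p x); last first.
    have hp0 : p x = 0 by apply/eqP; rewrite eq_le hpx0 p_ge0.
    rewrite big1; last by move=> y _; rewrite hp0 !mul0r mulr0 addr0.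
    by rewrite big1 // => y _; rewrite hp0 !mul0r.
  have [hr hZ hs hq'] := @step q x qge hpx (@iter_pos k x hpx).
  rewrite [RHS](eq_bigr (fun y => qopt x y * (p x * (K * ln (Z x) - ln (p x))))); last first.
    by move=> y _; ring.
  rewrite -big_distrl /= (hqo x).2 mul1r.
  rewrite (eq_bigr (fun y => q' x y * (p x * (K * ln (Z x) - ln (p x))))); last first.
    move=> y _.
    have [hW0|hW0] := ltrP 0 (W x y); last first.
      have hw : W x y = 0 by apply/eqP; rewrite eq_le hW0 W_ge0.
      have -> : q' x y = 0 by rewrite /q' /upd hw !mul0r.
      by rewrite !mulr0 !mul0r mulr0 addr0.
    have hrx := hr _ hW0.
    have e1 : q' x y / W x y = r y x `^ beta / Z x.
      by rewrite /q' /upd -/(Z x); field; rewrite !gt_eqF.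
    rewrite e1 ln_div ?posrE ?powR_gt0 // ln_powR ln_div ?posrE //.
    rewrite /K /beta; field.
    by rewrite a1' a0 a1.
  by rewrite -big_distrl /= hs mul1r.
rewrite hA [FC a p W qopt ropt]FC_sum -dsumZ.
pose E := fun x y => (K - 1) * (p x * qopt x y - p x * q x y)
                     + (p x * qopt x y - m y * ropt y x).
have hP1 : \sum_x \sum_y p x * qopt x y = 1.
  rewrite -(hp.2); apply eq_bigr => x _; by rewrite -big_distrr /= (hqo x).2 mulr1.
have hQ1 : \sum_x \sum_y p x * q x y = 1.
  rewrite -(hp.2); apply eq_bigr => x _; rewrite -big_distrr /=.
  have [hpx|hpx0] := ltrP 0 (p x); first by rewrite iter_sum // mulr1.
  have hp0 : p x = 0 by apply/eqP; rewrite eq_le hpx0 p_ge0.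
  by rewrite hp0 mul0r.
have hM1 : \sum_x \sum_y m y * ropt y x = 1.
  rewrite exchange_big /=.
  rewrite (eq_bigr (fun y => m y)); last first.
    by move=> y _; rewrite -big_distrr /= (hro y).2 mulr1.
  by rewrite /m exchange_big.
have hE : \sum_x \sum_y E x y = 0.
  by rewrite /E dsumD !dsumB dsumZ dsumB hP1 hQ1 hM1 !subrr mulr0 addr0.
have hD : forall x y,
  (a / (1 - a) * (p x * qopt x y * ln (qopt x y / W x y)) +
     p x * qopt x y * ln (ropt y x / p x))
  - p x * qopt x y * (K * ln (Z x) - ln (p x)) + E x y
  <= K * (p x * qopt x y * ln (q' x y / q x y)).
  move=> x y.
  have hP0 : 0 <= p x * qopt x y by rewrite mulr_ge0 ?p_ge0.
  have [hP|hP] := ltrP 0 (p x * qopt x y); last first.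
    have hp0 : p x * qopt x y = 0 by apply/eqP; rewrite eq_le hP hP0.
    rewrite /E hp0 !mul0r !mulr0.
    have hK1 : 0 <= K - 1 by rewrite subr_ge0.
    have := mulr_ge0 hK1 (mulr_ge0 (p_ge0 x) (qge x y)).
    have := mulr_ge0 (mge y) (roge x y).
    lra.
  have hpx : 0 < p x.
    rewrite lt_neqAle p_ge0 andbT; apply/negP => /eqP h.
    by move: hP; rewrite -h mul0r ltxx.
  have hqo0 : 0 < qopt x y.
    rewrite lt_neqAle qoge andbT; apply/negP => /eqP h.
    by move: hP; rewrite -h mulr0 ltxx.
  have [hW0 hro0] := had x y hpx hqo0.
  have [hr hZ hs hq'] := @step q x qge hpx (@iter_pos k x hpx).
  have hq0' : 0 < q x y := @iter_pos k x hpx y hW0.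
  have hm : 0 < m y := @m_gt0 q x y qge hpx hq0'.
  have hrx := hr _ hW0.
  have hqp := hq' _ hW0.
  have h1 := @ln_key R _ _ hP (mulr_gt0 hpx hq0').
  have h2 := @ln_key R _ _ hP (mulr_gt0 hm hro0).
  rewrite !lnM ?posrE // in h1 h2.
  have eq' : ln (q' x y) = ln (W x y) + beta * ln (r y x) - ln (Z x).
    by rewrite /q' /upd -/(Z x) ln_div ?posrE ?mulr_gt0 ?powR_gt0 // lnM ?posrE ?powR_gt0 // ln_powR.
  have eqr : ln (r y x) = ln (p x) + ln (q x y) - ln (m y).
    by rewrite /r /rev_of -/(m y) ln_div ?posrE ?mulr_gt0 // lnM ?posrE.
  rewrite (@ln_div R (qopt x y)) ?posrE // (@ln_div R (ropt y x)) ?posrE // (@ln_div R (q' x y)) ?posrE // eq' eqr.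
  rewrite /E.
  move: h1 h2.
  set lp := ln (p x); set lqo := ln (qopt x y); set lq := ln (q x y).
  set lm := ln (m y); set lro := ln (ropt y x); set lW := ln (W x y).
  set lZ := ln (Z x).
  set P := p x * qopt x y; set Q1 := p x * q x y; set Q2 := m y * ropt y x.
  move=> h1 h2.
  rewrite -subr_ge0.
  have -> : forall L, K * (P * (lW + beta * (lp + lq - lm) - lZ - lq)) - L = K * (P * (lW + beta * (lp + lq - lm) - lZ - lq)) - L by [].
  set G := (X in 0 <= X).
  have -> : G = (K - 1) * (P * (lp + lqo - (lp + lq)) - (P - Q1))
               + (P * (lp + lqo - (lm + lro)) - (P - Q2)).
    rewrite /G /K /beta; field.
    by rewrite a1' a0 a1.
  by rewrite addr_ge0 ?mulr_ge0 ?subr_ge0 // subr_ge0.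
have := @dsum_le _ _ hD.
rewrite dsumD dsumB hE addr0.
done.
Qed.

End S.

Theorem lemma4 (R : realType) (X Y : finType) (a : R) (p : X -> R)
  (W q0 qopt : X -> Y -> R) (ropt : Y -> X -> R) (k : nat) :
  1 < a ->
  is_dist p -> is_channel W ->
  is_channel q0 -> (forall x y, 0 < W x y -> 0 < q0 x y) ->
  is_channel qopt -> is_revchannel ropt -> admissible p W qopt ropt ->
  (forall (q : X -> Y -> R) (r : Y -> X -> R),
      is_channel q -> is_revchannel r -> admissible p W q r ->
      FC a p W q r <= FC a p W qopt ropt) ->
  FC a p W qopt ropt
    - FC a p W (qiter a p W q0 k.+1) (rev_of p (qiter a p W q0 k))
  <= a / (a - 1) *
     \sum_(x : X) \sum_(y : Y)
        p x * qopt x y * ln (qiter a p W q0 k.+1 x y / qiter a p W q0 k x y).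
Proof.
move=> ha hp hW hq0 hq0W hqo hro had _.
exact: (@main R X Y a p W q0 ha hp hW hq0 hq0W qopt ropt k hqo hro had).
Qed.
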